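(* Let $f_1,\dots,f_T\in\mathbb R$ be piecewise constant with change points $0=\eta_0<\eta_1<\dots<\eta_{K+1}=T$, i.e. $f$ is constant on $\{\eta_k+1,\dots,\eta_{k+1}\}$ for each $k$, and let $\kappa_r=|f_{\eta_r+1}-f_{\eta_r}|$. Let $0\le s<e\le T$ be integers such that $\eta_{r-1}\le s<\eta_r<\eta_{r+1}\le\dots\le\eta_{r+q}\le e\le\eta_{r+q+1}$ for some $q\ge1$, with $\eta_{r+1}<e$. If $\eta_r-s\le c_1^2\Delta$ for some $c_1\le1/4$ and $\eta_{r+1}-\eta_r\ge\Delta$, then \[ |\widetilde f^{s,e}_{\eta_r}|\le c_1|\widetilde f^{s,e}_{\eta_{r+1}}|+2\kappa_r\sqrt{\eta_r-s}, \] where for $s<t<e$, \[ \widetilde f^{s,e}_t=\sqrt{\frac{e-t}{(e-s)(t-s)}}\sum_{i=s+1}^tf_i-\sqrt{\frac{t-s}{(e-s)(e-t)}}\sum_{i=t+1}^ef_i. \] *)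

(* Defs.v *)
From HB Require Import structures.
From mathcomp Require Import all_boot all_order all_algebra.
From mathcomp Require Import reals.
Set Implicit Arguments. Unset Strict Implicit. Unset Printing Implicit Defensive.
Import Order.TTheory GRing.Theory Num.Theory.
Local Open Scope ring_scope.

Definition ftilde (R : realType) (f : nat -> R) (s e t : nat) : R :=
  Num.sqrt ((e%:R - t%:R) / ((e%:R - s%:R) * (t%:R - s%:R)))
    * (\sum_(s.+1 <= i < t.+1) f i)
  - Num.sqrt ((t%:R - s%:R) / ((e%:R - s%:R) * (e%:R - t%:R)))
    * (\sum_(t.+1 <= i < e.+1) f i).

Definition piecewise_constant (R : realType) (f : nat -> R) (T K : nat)
  (eta : nat -> nat) : Prop :=
  eta 0%N = 0%N /\ eta K.+1 = T /\
  (forall k, (k <= K)%N -> (eta k < eta k.+1)%N) /\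
  (forall k i, (k <= K)%N -> (eta k < i <= eta k.+1)%N -> f i = f (eta k).+1).

(* Main.v *)
Require Import Defs.
From HB Require Import structures.
From mathcomp Require Import all_boot all_order all_algebra.
From mathcomp Require Import reals.
From mathcomp Require Import ring lra zify.
Import Order.TTheory GRing.Theory Num.Theory.
Local Open Scope ring_scope.

Lemma sqrt_mulA (R : rcfType) (x A : R) : 0 <= x -> 0 <= A ->
  Num.sqrt x * A = Num.sqrt (x * A ^+ 2).
Proof. by move=> hx hA; rewrite sqrtrM // sqrtr_sqr ger0_norm. Qed.

Lemma key (R : rcfType) (A B C a b S c1 : R) :
  0 < A -> 0 < B -> 0 < C -> 0 < c1 -> c1 <= 1 -> A <= c1 ^+ 2 * B ->
  `| Num.sqrt ((B + C) / ((A + B + C) * A)) * (A * a)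
     - Num.sqrt (A / ((A + B + C) * (B + C))) * (B * b + S) |
  <= c1 * `| Num.sqrt (C / ((A + B + C) * (A + B))) * (A * a + B * b)
     - Num.sqrt ((A + B) / ((A + B + C) * C)) * S |
     + 2 * `|b - a| * Num.sqrt A.
Proof.
move=> A0 B0 C0 c0 c1le hA.
set N := A + B + C.
have N0 : 0 < N by rewrite /N; lra.
set al := Num.sqrt ((B + C) / (N * A)).
set be := Num.sqrt (A / (N * (B + C))).
set ga := Num.sqrt (C / (N * (A + B))).
set de := Num.sqrt ((A + B) / (N * C)).
have BC0 : 0 < B + C by lra.
have A0' : 0 <= A by lra.
have C0' : 0 <= C by lra.
have BC0' : 0 <= B + C by lra.
have AB0' : 0 <= A + B by lra.
have AB0 : 0 < A + B by lra.
have r1 : 0 <= (B + C) / (N * A) by rewrite divr_ge0 ?mulr_ge0 ?ltW.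
have r2 : 0 <= A / (N * (B + C)) by rewrite divr_ge0 ?mulr_ge0 ?ltW.
have r3 : 0 <= C / (N * (A + B)) by rewrite divr_ge0 ?mulr_ge0 ?ltW.
have r4 : 0 <= (A + B) / (N * C) by rewrite divr_ge0 ?mulr_ge0 ?ltW.
have hab : al * A = be * (B + C).
  rewrite /al /be !sqrt_mulA //.
  have -> : (B + C) / (N * A) * A ^+ 2 = A / (N * (B + C)) * (B + C) ^+ 2 by field; rewrite ?mulf_neq0 ?gt_eqF.
  by [].
have hgd : ga * (A + B) = de * C.
  rewrite /ga /de !sqrt_mulA //.
  have -> : C / (N * (A + B)) * (A + B) ^+ 2 = (A + B) / (N * C) * C ^+ 2 by field; rewrite ?mulf_neq0 ?gt_eqF.
  by [].
have halA : al * A <= Num.sqrt A.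
  rewrite /al sqrt_mulA // ler_sqrt //.
  have -> : (B + C) / (N * A) * A ^+ 2 = A * ((B + C) / N) by field; rewrite ?mulf_neq0 ?gt_eqF.
  rewrite ger_pMr // ler_pdivrMr //; rewrite /N; lra.
have hgaA : ga * A <= Num.sqrt A.
  rewrite /ga sqrt_mulA // ler_sqrt //.
  have -> : C / (N * (A + B)) * A ^+ 2 = A * (C * A / (N * (A + B))) by field; rewrite ?mulf_neq0 ?gt_eqF.
  rewrite ger_pMr // ler_pdivrMr ?mulr_gt0 //; rewrite /N; nra.
have hbd : be <= c1 * de.
  rewrite /de -(ger0_norm (ltW c0)) -sqrtr_sqr -sqrtrM ?sqr_ge0 // ler_sqrt; last first.
    by rewrite mulr_ge0 ?sqr_ge0 // divr_ge0 ?mulr_ge0 ?ltW.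
  have -> : A / (N * (B + C)) = (A * C) / (N * (B + C) * C) by field; rewrite ?mulf_neq0 ?gt_eqF.
  have -> : c1 ^+ 2 * ((A + B) / (N * C)) = (c1 ^+ 2 * ((A + B) * (B + C))) / (N * (B + C) * C)
    by field; rewrite ?mulf_neq0 ?gt_eqF.
  rewrite ler_pM2r ?invr_gt0 ?mulr_gt0 //.
  apply: (le_trans (y := c1 ^+ 2 * B * C)); first by rewrite ler_pM2r.
  rewrite -mulrA ler_wpM2l ?sqr_ge0 //; nra.
set u := S - C * b.
have hX : al * (A * a) - be * (B * b + S) = al * A * (a - b) - be * u.
  rewrite /u mulrA; have -> : al * A * a = be * (B + C) * a + (al * A - be * (B + C)) * a by ring.
  rewrite hab; ring.
have hY : ga * (A * a + B * b) - de * S = ga * A * (a - b) - de * u.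
  rewrite /u; have -> : de * S = de * C * b + de * (S - C * b) by ring.
  rewrite -hgd; ring.
rewrite hX hY.
have al0 : 0 <= al by apply: sqrtr_ge0.
have be0 : 0 <= be by apply: sqrtr_ge0.
have ga0 : 0 <= ga by apply: sqrtr_ge0.
have de0 : 0 <= de by apply: sqrtr_ge0.
have d0 : 0 <= `|a - b| by [].
have u0 : 0 <= `|u| by [].
have e1 : `|al * A * (a - b) - be * u| <= al * A * `|a - b| + be * `|u|.
  have := ler_normB (al * A * (a - b)) (be * u).
  rewrite normrM (ger0_norm (mulr_ge0 al0 A0')) normrM (ger0_norm be0) //.
have e2 : de * `|u| <= `|ga * A * (a - b) - de * u| + ga * A * `|a - b|.
  have E : ga * A * (a - b) - (ga * A * (a - b) - de * u) = de * u by ring.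
  have := ler_normB (ga * A * (a - b)) (ga * A * (a - b) - de * u).
  rewrite E normrM (ger0_norm de0) normrM (ger0_norm (mulr_ge0 ga0 A0')); lra.
have e3 : be * `|u| <= c1 * de * `|u| by apply: ler_wpM2r.
have e4 : c1 * (de * `|u|) <= c1 * (`|ga * A * (a - b) - de * u| + ga * A * `|a - b|)
  by apply: ler_wpM2l; [apply: ltW|].
have e5 : c1 * (ga * A * `|a - b|) <= Num.sqrt A * `|a - b|.
  rewrite mulrA; apply: ler_wpM2r => //.
  apply: (le_trans (y := 1 * (ga * A))); first by apply: ler_wpM2r; [apply: mulr_ge0|].
  by rewrite mul1r.
have e6 : al * A * `|a - b| <= Num.sqrt A * `|a - b| by apply: ler_wpM2r.
rewrite (distrC b a).
have : be * `|u| <= c1 * `|ga * A * (a - b) - de * u| + c1 * (ga * A * `|a - b|).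
  rewrite -mulrDr; apply: (le_trans e3); rewrite -mulrA; exact: e4.
lra.
Qed.

Theorem lemma23 (R : realType) (f : nat -> R) (T K : nat) (eta : nat -> nat)
  (s e r q : nat) (c1 Delta : R) :
  piecewise_constant f T K eta ->
  (1 <= r)%N -> (1 <= q)%N -> (r + q <= K)%N ->
  (s < e)%N -> (e <= T)%N ->
  (eta r.-1 <= s)%N -> (s < eta r)%N ->
  (eta (r + q)%N <= e)%N -> (e <= eta (r + q).+1)%N ->
  (eta r.+1 < e)%N ->
  0 < c1 -> c1 <= 1 / 4 ->
  (eta r - s)%N%:R <= c1 ^+ 2 * Delta ->
  Delta <= (eta r.+1 - eta r)%N%:R ->
  `|ftilde f s e (eta r)|
    <= c1 * `|ftilde f s e (eta r.+1)|
       + 2 * `|f (eta r).+1 - f (eta r)| * Num.sqrt (eta r - s)%N%:R.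
Proof.
move=> [eta0 [etaK [mono pc]]] r1 q1 rqK se eT sl sr el eu er c0 c14 hA hD.
have rK : (r <= K)%N by lia.
have tu : (eta r < eta r.+1)%N := mono r rK.
have fa : forall i, (s < i <= eta r)%N -> f i = f (eta r).
  move=> i hi.
  have h1 := pc r.-1 i; have h2 := pc r.-1 (eta r).
  rewrite prednK // in h1 h2.
  rewrite h1 ?h2 //; lia.
have fb : forall i, (eta r < i <= eta r.+1)%N -> f i = f (eta r).+1.
  by move=> i hi; apply: pc.
have S1 : \sum_(s.+1 <= i < (eta r).+1) f i = ((eta r)%:R - s%:R) * f (eta r).
  rewrite (eq_big_nat _ _ (F2 := fun _ => f (eta r))); last by move=> i hi; apply: fa; lia.
  by rewrite sumr_const_nat subSS -natrB ?(ltnW sr) // mulr_natl.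
have S2 : \sum_((eta r).+1 <= i < (eta r.+1).+1) f i
          = ((eta r.+1)%:R - (eta r)%:R) * f (eta r).+1.
  rewrite (eq_big_nat _ _ (F2 := fun _ => f (eta r).+1)); last by move=> i hi; apply: fb; lia.
  by rewrite sumr_const_nat subSS -natrB ?(ltnW tu) // mulr_natl.
set S := \sum_((eta r.+1).+1 <= i < e.+1) f i.
have S3 : \sum_(s.+1 <= i < (eta r.+1).+1) f i
     = ((eta r)%:R - s%:R) * f (eta r) + ((eta r.+1)%:R - (eta r)%:R) * f (eta r).+1.
  by rewrite (big_cat_nat _ (n := (eta r).+1)) ?S1 ?S2 //; lia.
have S4 : \sum_((eta r).+1 <= i < e.+1) f i
     = ((eta r.+1)%:R - (eta r)%:R) * f (eta r).+1 + S.
  by rewrite (big_cat_nat _ (n := (eta r.+1).+1)) ?S2 //; lia.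
rewrite /ftilde S1 S3 S4 natrB; last by apply: ltnW.
set xs := s%:R : R; set xt := (eta r)%:R : R; set xu := (eta r.+1)%:R : R.
set xe := e%:R : R.
have A0 : 0 < xt - xs by rewrite subr_gt0 ltr_nat.
have B0 : 0 < xu - xt by rewrite subr_gt0 ltr_nat.
have C0 : 0 < xe - xu by rewrite subr_gt0 ltr_nat.
have c1le : c1 <= 1 by lra.
have hAB : xt - xs <= c1 ^+ 2 * (xu - xt).
  rewrite natrB in hA; last by apply: ltnW.
  rewrite natrB in hD; last by apply: ltnW.
  apply: (le_trans hA); apply: ler_wpM2l; [exact: sqr_ge0| exact: hD].
have := (@key R (xt - xs) (xu - xt) (xe - xu) (f (eta r)) (f (eta r).+1) S c1 A0 B0 C0 c0 c1le hAB).
have -> : xt - xs + (xu - xt) + (xe - xu) = xe - xs by ring.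
have -> : xt - xs + (xu - xt) = xu - xs by ring.
have -> : xu - xt + (xe - xu) = xe - xt by ring.
by [].
Qed.
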